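(* Every convex body $Q\subset\mathbb R^d$ containing the origin admits a linear projection $P$ (a linear idempotent map) onto a one-dimensional linear subspace such that $P(Q)\subseteq Q$.
   Context: A convex body is a compact convex set with non-empty interior. *)

(* Defs.v *)
From HB Require Import structures.
From mathcomp Require Import all_boot all_order all_algebra.
From mathcomp Require Import all_classical all_reals all_analysis.

(* Main.v *)
Require Import Defs.
From HB Require Import structures.
From mathcomp Require Import all_boot all_order all_algebra.
From mathcomp Require Import all_classical all_reals all_analysis.
From mathcomp Require Import ring lra.
Import GRing.Theory Num.Theory numFieldTopology.Exports numFieldNormedType.Exports.
Import Order.TTheory.
Local Open Scope classical_set_scope.
Local Open Scope ring_scope.

Section S.
Variables (R : realType) (d : nat).
Implicit Types x y z n : 'rV[R]_d.

Definition dot x y : R := \sum_i x ord0 i * y ord0 i.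

Lemma dotC x y : dot x y = dot y x.
Proof. by apply: eq_bigr => i _; rewrite mulrC. Qed.

Lemma dotDl x y z : dot (x + y) z = dot x z + dot y z.
Proof. by rewrite /dot -big_split; apply: eq_bigr => i _; rewrite !mxE mulrDl. Qed.

Lemma dotZl (a : R) x y : dot (a *: x) y = a * dot x y.
Proof. by rewrite /dot mulr_sumr; apply: eq_bigr => i _; rewrite !mxE mulrA. Qed.

Lemma dotNl x y : dot (- x) y = - dot x y.
Proof. by rewrite -scaleN1r dotZl mulN1r. Qed.

Lemma dotBl x y z : dot (x - y) z = dot x z - dot y z.
Proof. by rewrite dotDl dotNl. Qed.

Lemma dotDr x y z : dot x (y + z) = dot x y + dot x z.
Proof. by rewrite dotC dotDl !(dotC x). Qed.
Lemma dotZr (a : R) x y : dot x (a *: y) = a * dot x y.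
Proof. by rewrite dotC dotZl dotC. Qed.
Lemma dotNr x y : dot x (- y) = - dot x y.
Proof. by rewrite dotC dotNl dotC. Qed.
Lemma dotBr x y z : dot x (y - z) = dot x y - dot x z.
Proof. by rewrite dotDr dotNr. Qed.
Lemma dot0l x : dot 0 x = 0.
Proof. by rewrite -(scale0r 0) dotZl mul0r. Qed.
Lemma dot0r x : dot x 0 = 0.
Proof. by rewrite dotC dot0l. Qed.

Lemma dot_ge0 x : 0 <= dot x x.
Proof. by apply: sumr_ge0 => i _; rewrite -expr2 sqr_ge0. Qed.

Lemma dot_gt0 x : x != 0 -> 0 < dot x x.
Proof.
move=> x0; rewrite lt_neqAle dot_ge0 andbT eq_sym; apply/negP => /eqP.
move/eqP; rewrite psumr_eq0; last by move=> i _; rewrite -expr2 sqr_ge0.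
move/allP => H; move/negP: x0; apply; apply/eqP/rowP => i.
have := H i (mem_index_enum i); rewrite -expr2 sqrf_eq0 mxE => /eqP ->.
by [].
Qed.

Lemma entry_le x i : `|x ord0 i| <= `|x|.
Proof.
have /mapP[j Hj ->] : `|x ord0 i| \in [seq `|x k.1 k.2| | k : 'I_1 * 'I_d].
  by apply/mapP; exists (ord0, i) => //=; rewrite mem_enum.
by rewrite [leRHS]/Num.Def.normr /= mx_normrE; apply/bigmax_geP; right => /=; exists j.
Qed.

Lemma dot_le x y : `|dot x y| <= d%:R * (`|x| * `|y|).
Proof.
rewrite /dot (le_trans (ler_norm_sum _ _ _))//.
rewrite -[X in X%:R * _](card_ord d) -sumr_const.
by rewrite mulr_suml; apply: ler_sum => i _; rewrite mul1r normrM ler_pM ?entry_le.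
Qed.

Lemma loclip_continuous (f : 'rV[R]_d -> R) :
  (forall x, exists2 K, 0 < K & forall y, `|x - y| <= 1 -> `|f x - f y| <= K * `|x - y|) ->
  continuous f.
Proof.
move=> H x; have [K K0 HK] := H x.
apply/(@cvgrPdist_lt _ _ _ _ (nbhs_filter x)) => e e0.
apply/(@nbhs_normP _ 'rV[R]_d x); exists (Num.min 1 (e / K)); first by rewrite /= lt_min ltr01 divr_gt0.
move=> y /= Hy.
have Hy1 : `|x - y| <= 1 by apply: ltW; apply: lt_le_trans Hy _; rewrite ge_min lexx.
apply: le_lt_trans (HK _ Hy1) _.
rewrite -ltr_pdivlMl // mulrC.
by apply: lt_le_trans Hy _; rewrite ge_min lexx orbT.
Qed.


Lemma bounded_of (A : set 'rV[R]_d) B : (forall y, A y -> `|y| <= B) -> bounded_set A.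
Proof.
move=> H; exists B; split; first by rewrite num_real.
by move=> M BM y Ay /=; exact: le_trans (H y Ay) (ltW BM).
Qed.

Lemma dot_sq_diff u v : dot u u - dot v v = dot (u - v) (u + v).
Proof. rewrite dotBl !dotDr (dotC v u); ring. Qed.

Lemma dot_expand g e (t : R) :
  dot (g - t *: e) (g - t *: e) = dot g g - 2 * t * dot g e + t * t * dot e e.
Proof. rewrite !dotBl !dotBr !dotZl !dotZr (dotC e g); ring. Qed.

Variables (Q : set 'rV[R]_d).
Hypothesis Qconv : convex_set (Q : set (convex_lmodType 'rV[R]_d)).
Hypothesis Qcpt : compact Q.
Hypothesis Q0 : Q 0.

Lemma conv_mem x y t : Q x -> Q y -> 0 <= t -> t <= 1 -> Q (t *: x + (1 - t) *: y).
Proof.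
move=> Qx Qy t0 t1.
have := @Qconv x y (Itv01 t0 t1) (mem_set Qx) (mem_set Qy).
by rewrite inE.
Qed.

Lemma Qbound : exists2 B, 0 < B & forall y, Q y -> `|y| <= B.
Proof.
have /ex_strict_bound_gt0 [B B0 HB] : bounded_set Q by exact: compact_bounded.
by exists B => // y Qy; apply: ltW; apply: HB.
Qed.

Lemma dot_continuous n : continuous (dot n).
Proof.
apply: loclip_continuous => x; exists (d%:R * `|n| + 1).
  by apply: ltr_wpDl => //; apply: mulr_ge0.
move=> y _; rewrite -dotBr (le_trans (dot_le _ _)) // mulrA.
by rewrite ler_wpM2r // lerDl.
Qed.

Definition M n := sup [set dot n y | y in Q].

Lemma M_spec n : (exists2 a, Q a & dot n a = M n) /\ (forall y, Q y -> dot n y <= M n).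
Proof.
have [c cQ Hc] := @compact_EVT_max _ R (dot n) Q (ex_intro _ 0 Q0) Qcpt
  (continuous_subspaceT (dot_continuous n)).
have ub : ubound [set dot n y | y in Q] (dot n c).
  by move=> _ [y Qy <-]; apply: Hc; rewrite inE.
have E : M n = dot n c.
  apply/eqP; rewrite eq_le; apply/andP; split.
    by apply: ge_sup => //; exists (dot n 0); exists 0.
  apply: ub_le_sup; first by exists (dot n c).
  by exists c => //; rewrite inE in cQ.
split; first by exists c; [rewrite inE in cQ|rewrite E].
by move=> y Qy; rewrite E; apply: ub; exists y.
Qed.

Lemma M_ub n y : Q y -> dot n y <= M n.
Proof. by case: (M_spec n) => _; apply. Qed.
Arguments M_ub n {y}.

Lemma M_att n : exists2 a, Q a & dot n a = M n.
Proof. by case: (M_spec n). Qed.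

Lemma M_char n v : (exists2 a, Q a & dot n a = v) -> (forall y, Q y -> dot n y <= v) -> M n = v.
Proof.
move=> [a Qa <-] H; have [b Qb Hb] := M_att n.
by apply/eqP; rewrite eq_le M_ub // andbT -Hb H.
Qed.


Lemma MZ (l : R) n : 0 <= l -> M (l *: n) = l * M n.
Proof.
move=> l0; apply: M_char.
  by have [a Qa Ha] := M_att n; exists a => //; rewrite dotZl Ha.
by move=> y Qy; rewrite dotZl ler_wpM2l // M_ub.
Qed.

Lemma M0 : M 0 = 0.
Proof. by rewrite -(scale0r 0) MZ // mul0r. Qed.

Lemma Mlip : exists2 K, 0 < K & forall n n', `|M n - M n'| <= K * `|n - n'|.
Proof.
have [B B0 HB] := Qbound.
have H : forall n n', M n <= M n' + d%:R * B * `|n - n'|.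
  move=> n n'; have [a Qa <-] := M_att n.
  have -> : dot n a = dot n' a + dot (n - n') a by rewrite dotBl; ring.
  apply: lerD; first exact: M_ub.
  apply: le_trans (ler_norm _) _; apply: le_trans (dot_le _ _) _.
  by rewrite -mulrA ler_wpM2l // mulrC ler_wpM2r // HB.
exists (d%:R * B + 1); first by apply: ltr_wpDl => //; apply: mulr_ge0 => //; apply: ltW.
move=> n n'; rewrite ler_norml; apply/andP; split.
  have := H n' n; rewrite distrC mulrDl mul1r; have := normr_ge0 (n - n'); lra.
have := H n n'; rewrite mulrDl mul1r; have := normr_ge0 (n - n'); lra.
Qed.

Lemma M_continuous : continuous M.
Proof.
have [K K0 HK] := Mlip.
by apply: loclip_continuous => x; exists K => // y _; apply: HK.
Qed.

Lemma MN_continuous : continuous (fun n => M (- n)).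
Proof.
have [K K0 HK] := Mlip.
apply: loclip_continuous => x; exists K => // y _.
by apply: le_trans (HK _ _) _; rewrite -opprD normrN.
Qed.


Lemma xP n (u : 'rV[R]_d) x : x *m (n^T *m u) = dot x n *: u.
Proof.
rewrite mulmxA (mx11_scalar (x *m n^T)) mul_scalar_mx; congr (_ *: _).
by rewrite !mxE; apply: eq_bigr => i _; rewrite mxE.
Qed.

Lemma finish n (u : 'rV[R]_d) (lo hi : R) : dot u n = 1 -> lo <= hi -> Q (lo *: u) -> Q (hi *: u) ->
  (forall x, Q x -> lo <= dot x n <= hi) ->
  exists P : 'M[R]_d, P *m P = P /\ \rank P = 1%N /\ (forall x, Q x -> Q (x *m P)).
Proof.
move=> un1 lohi Qlo Qhi Hx.
have u0 : u != 0 by apply/eqP => u0; move: un1; rewrite u0 dot0l => /eqP; rewrite eq_sym oner_eq0.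
exists (n^T *m u); split; last split.
- by rewrite -mulmxA xP un1 scale1r.
- apply/eqP; rewrite eqn_leq; apply/andP; split.
    exact: leq_trans (mxrankM_maxr _ _) (rank_leq_row _).
  rewrite lt0n mxrank_eq0; apply/eqP => P0.
  by move: (xP n u u); rewrite P0 mulmx0 un1 scale1r => /esym/eqP; rewrite (negbTE u0).
- move=> x Qx; rewrite xP; have /andP[h1 h2] := Hx x Qx.
  have [E|ne] := eqVneq lo hi.
    by have -> : dot x n = lo by apply/eqP; rewrite eq_le h1 E h2.
  have hl : 0 < hi - lo by rewrite subr_gt0 lt_neqAle ne.
  pose s := (dot x n - lo) / (hi - lo).
  have -> : dot x n *: u = s *: (hi *: u) + (1 - s) *: (lo *: u).
    rewrite !scalerA -scalerDl; congr (_ *: _); rewrite /s; field.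
    by rewrite gt_eqF.
  apply: conv_mem => //; rewrite /s.
    by apply: divr_ge0; rewrite ?subr_ge0 // ltW.
  by rewrite ler_pdivrMr // mul1r lerD2r.
Qed.


Lemma caseA g : interior Q !=set0 -> g != 0 -> M (- g) <= 0 ->
  exists P : 'M[R]_d, P *m P = P /\ \rank P = 1%N /\ (forall x, Q x -> Q (x *m P)).
Proof.
move=> [c Qc] g0 Mg.
have Mgpos : 0 < M g.
  rewrite ltNge; apply/negP => Mg0.
  have [e e0 He] : exists2 e, 0 < e & forall y, `|c - y| < e -> Q y.
    by move/(@nbhs_normP _ 'rV[R]_d c): Qc => [e e0 He]; exists e.
  have ng : 0 < `|g| by rewrite normr_gt0.
  pose t := e / (2 * `|g|).
  have t0 : 0 < t by rewrite divr_gt0 // mulr_gt0.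
  have Qy : Q (c + t *: g).
    apply: He; rewrite opprD addrA subrr add0r normrN normrZ gtr0_norm //.
    have -> : e / (2 * `|g|) * `|g| = e / 2 by field; rewrite gt_eqF.
    by rewrite gtr_pMr // invf_lt1 // ltr1n.
  have h1 := M_ub g Qy.
  have h2 := M_ub (- g) (interior_subset Qc).
  move: h1 h2; rewrite dotDr dotZr dotNl.
  have := @dot_gt0 g g0; nra.
have [a Qa Ha] := M_att g.
apply: (@finish g ((M g)^-1 *: a) 0 (M g)).
- by rewrite dotZl dotC Ha mulVf // gt_eqF.
- exact: ltW.
- by rewrite scale0r.
- by rewrite scalerA mulfV ?gt_eqF // scale1r.
- move=> x Qx; rewrite dotC M_ub // andbT.
  by have := M_ub (- g) Qx; rewrite dotNl; lra.
Qed.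

Lemma incl r : 0 < r -> (forall n, M n <= r * M (- n)) -> forall z, Q z -> Q (- r^-1 *: z).
Proof.
move=> r0 hom z Qz; apply: contrapT => wQ.
set w := - r^-1 *: z in wQ.
pose phi y := dot (w - y) (w - y).
have phic : continuous phi.
  apply: loclip_continuous => x; exists (d%:R * (2 * `|w - x| + 1) + 1).
    by apply: ltr_wpDl => //; apply: mulr_ge0 => //; apply: addr_ge0 => //; apply: mulr_ge0.
  move=> y xy1; rewrite /phi dot_sq_diff.
  have -> : w - x - (w - y) = - (x - y) by rewrite opprB addrC addrA subrK opprB.
  rewrite dotNl normrN (le_trans (dot_le _ _)) //.
  have h : `|w - x + (w - y)| <= 2 * `|w - x| + 1.
    apply: le_trans (ler_normD _ _) _.
    have -> : w - y = (w - x) + (x - y) by rewrite addrA subrK.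
    apply: le_trans (lerD (lexx _) (ler_normD _ _)) _.
    by rewrite mulr2n mulrDl mul1r addrA lerD2l.
  rewrite mulrDl mul1r; apply: ler_wpDr => //.
  by rewrite -mulrA ler_wpM2l // mulrC ler_wpM2r.
have [p pQ Hp] := @compact_EVT_min _ R phi Q (ex_intro _ 0 Q0) Qcpt (continuous_subspaceT phic).
rewrite inE in pQ.
set g := w - p.
have g0 : g != 0 by apply/eqP => /subr0_eq wp; apply: wQ; rewrite wp.
have var : forall y, Q y -> dot g y <= dot g p.
  move=> y Qy; rewrite leNgt; apply/negP => hlt.
  set e := y - p.
  set del := dot g e.
  have del0 : 0 < del by rewrite /del /e dotBr subr_gt0.
  set D := dot e e.
  have D0 : 0 <= D := dot_ge0 e.
  pose t := del / (D + del).
  have t0 : 0 < t by rewrite divr_gt0 // ltr_wpDl.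
  have t1 : t <= 1 by rewrite ler_pdivrMr ?mul1r ?lerDr // ltr_wpDl.
  have tD : t * (D + del) = del by rewrite /t mulfVK // gt_eqF // ltr_wpDl.
  have Qt := @conv_mem y p t Qy pQ (ltW t0) t1.
  clearbody t.
  have := Hp _ (mem_set Qt); rewrite /phi.
  have -> : w - (t *: y + (1 - t) *: p) = g - t *: e.
    by apply/rowP => i; rewrite /g /e !mxE; ring.
  rewrite dot_expand -/del -/D => h.
  have h' : 2 * t * del <= t * t * D by move: h; lra.
  have h3 : t * D = del - t * del by move: tD; rewrite mulrDr; lra.
  have : t * (t * D) = t * del - t * (t * del) by rewrite h3; ring.
  have := mulr_gt0 t0 del0; have := mulr_gt0 t0 (mulr_gt0 t0 del0); nra.
have [a Qa Ha] := M_att g.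
have Mgp : M g <= dot g p by rewrite -Ha var.
have gwp : dot g p < dot g w.
  by rewrite -subr_gt0 -dotBr dot_gt0.
have h1 := M_ub (- g) Qz.
have h2 := hom (- g); rewrite opprK in h2.
have : r * dot g w = - dot g z by rewrite /w dotZr mulrA mulrN mulfV ?gt_eqF // mulN1r.
rewrite dotNl in h1.
move=> h3.
have : r * dot g w <= r * M g by lra.
rewrite ler_pM2l // => h4; lra.
Qed.


Lemma caseB : (0 < d)%N -> (forall g, g != 0 -> 0 < M (- g)) ->
  exists P : 'M[R]_d, P *m P = P /\ \rank P = 1%N /\ (forall x, Q x -> Q (x *m P)).
Proof.
move=> d0 H.
have Mpos : forall g, g != 0 -> 0 < M g.
  by move=> g g0; rewrite -[g]opprK H // oppr_eq0.
have [v v0] : exists v : 'rV[R]_d, v != 0.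
  exists (const_mx 1); apply/eqP => /rowP/(_ (Ordinal d0)); rewrite !mxE => /eqP.
  by rewrite oner_eq0.
pose S := [set n : 'rV[R]_d | `|n| = 1].
have S0 : S !=set0 by exists (`|v|^-1 *: v); rewrite /S /= normfZV.
have Scl : closed S.
  have -> : S = (Num.Def.normr @^-1` [set x : R | x <= 1]) `&` (Num.Def.normr @^-1` [set x : R | 1 <= x]).
    apply/seteqP; split => x /=; first by move->.
    by move=> [h1 h2]; apply/eqP; rewrite eq_le h1 h2.
  apply: closedI.
    exact: (proj1 (continuous_closedP (Num.Def.normr : 'rV[R]_d -> R)) (@norm_continuous R 'rV[R]_d) _ (@closed_le R 1)).
  exact: (proj1 (continuous_closedP (Num.Def.normr : 'rV[R]_d -> R)) (@norm_continuous R 'rV[R]_d) _ (@closed_ge R 1)).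
have Scpt : compact S.
  by apply: bounded_closed_compact => //; apply: (@bounded_of _ 1) => y ->.
have [g0 g0S Hg0] := @compact_EVT_min _ R (fun n => M (- n)) S S0 Scpt
  (continuous_subspaceT MN_continuous).
rewrite inE /S /= in g0S.
have g00 : g0 != 0 by apply/eqP => g0e; move: g0S; rewrite g0e normr0 => /eqP; rewrite eq_sym oner_eq0.
set mu := M (- g0) in Hg0.
have mu0 : 0 < mu by apply: H.
pose N := [set n : 'rV[R]_d | M (- n) <= 1].
have N0 : N !=set0 by exists 0; rewrite /N /= oppr0 M0 ler01.
have Nbd : forall n, N n -> `|n| <= mu^-1.
  move=> n Nn; have [->|n0] := eqVneq n 0; first by rewrite normr0 invr_ge0 ltW.
  have nn : 0 < `|n| by rewrite normr_gt0.
  have gS : S (`|n|^-1 *: n) by rewrite /S /= normfZV.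
  have h := Hg0 _ (mem_set gS).
  have E : - n = `|n| *: (- (`|n|^-1 *: n)).
    by rewrite scalerN scalerA mulfV ?gt_eqF // scale1r.
  rewrite /N /= E MZ // in Nn.
  have : mu * `|n| <= 1.
    apply: le_trans Nn.
    by rewrite mulrC ler_wpM2l // ltW.
  by rewrite -ler_pdivlMl // mulr1.
have Ncl : closed N.
  exact: (proj1 (continuous_closedP (fun n : 'rV[R]_d => M (- n))) MN_continuous _ (@closed_le R 1)).
have Ncpt : compact N by apply: bounded_closed_compact => //; apply: (@bounded_of _ mu^-1).
have [n0 n0N Hn0] := @compact_EVT_max _ R M N N0 Ncpt (continuous_subspaceT M_continuous).
rewrite inE /N /= in n0N.
set r := M n0 in Hn0.
have hom : forall n, M n <= r * M (- n).
  move=> n; have [->|nz] := eqVneq n 0; first by rewrite oppr0 M0 mulr0.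
  have s0 : 0 < M (- n) by apply: H.
  have s0' : 0 <= (M (- n))^-1 by rewrite invr_ge0 ltW.
  have Nn : N ((M (- n))^-1 *: n).
    by rewrite /N /= -scalerN MZ ?s0' // mulVf // gt_eqF.
  have := Hn0 _ (mem_set Nn); rewrite MZ //.
  by rewrite ler_pdivrMl // mulrC.
have r0 : 0 < r.
  have := hom v; have := Mpos v v0; have := H v v0; nra.
have inc := @incl r r0 hom.
have [a Qa Ha] := M_att n0.
apply: (@finish n0 (r^-1 *: a) (-1) r).
- by rewrite dotZl dotC Ha /r mulVf // gt_eqF.
- by lra.
- by rewrite scalerA mulN1r; apply: inc.
- by rewrite scalerA mulfV ?gt_eqF // scale1r.
- move=> x Qx; rewrite dotC M_ub // andbT.
  by have := M_ub (- n0) Qx; rewrite dotNl; lra.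
Qed.

End S.

(* R^d is 'rV[R]_d; a linear map R^d -> R^d is x |-> x *m P, P : 'M[R]_d. *)
Theorem proposition2p1 (R : realType) (d : nat) (Q : set 'rV[R]_d) :
  (0 < d)%N ->
  convex_set (Q : set (convex_lmodType 'rV[R]_d)) ->
  compact Q ->
  interior Q !=set0 ->
  Q 0 ->
  exists P : 'M[R]_d,
    P *m P = P /\ \rank P = 1%N /\ (forall x, Q x -> Q (x *m P)).
Proof.
move=> d0 Qconv Qcpt Qint Q0.
have [[g [g0 Hg]]|nA] := pselect (exists g : 'rV[R]_d, g != 0 /\ @M R d Q (- g) <= 0).
  exact: (@caseA R d Q Qconv Qcpt Q0 g Qint g0 Hg).
apply: (@caseB R d Q Qconv Qcpt Q0 d0) => g g0; rewrite ltNge; apply/negP => Hg.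
by apply: nA; exists g.
Qed.
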